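(* Let $0\le\underline{m}<m$ and $r\ge0$ be integers, $\epsilon\in(0,1/2)$, and $k=m-\underline{m}$. If $z'\in\{0,1\}^{\mathbb{F}_2^{\underline{m}}}$ has independent entries each equal to $1$ with probability $\epsilon$, then $$\mathbb{P}\big[P_e(\underline{m},m,r,\epsilon\mid z')\ge P_e(m,r,\epsilon)/2+1/4\big]\le\frac{2^{2-k}}{(1/2-P_e(m,r,\epsilon))^2}.$$
   Context: $RM(m,r)$ is the set of evaluation vectors $(f(x))_{x\in\mathbb{F}_2^m}$ of polynomials over $\mathbb{F}_2$ in $m$ variables of degree at most $r$. Draw $f$ uniformly from $RM(m,r)$, $Z\in\{0,1\}^{\mathbb{F}_2^m}$ with i.i.d. Bernoulli$(\epsilon)$ entries independent of $f$, and $\tilde f=f+Z$. $L_{m,r,\epsilon}(\tilde f)$ is the most likely value of $f(0^m)$ given $\tilde f(x)$ for all $x\ne0^m$ (uniformly random if tied), and $P_e(m,r,\epsilon)=\mathbb{P}(L_{m,r,\epsilon}(\tilde f)\ne f(0^m))$. Identify $\mathbb{F}_2^{\underline{m}}$ with $\mathbb{F}_2^{\underline{m}}\times\{0\}^{m-\underline{m}}\subseteq\mathbb{F}_2^m$; for $z'\in\{0,1\}^{\mathbb{F}_2^{\underline{m}}}$, $P_e(\underline{m},m,r,\epsilon\mid z')$ is the probability that $L_{m,r,\epsilon}(\tilde f)\ne f(0^m)$ conditioned on the restriction of $Z$ to $\mathbb{F}_2^{\underline{m}}\times\{0\}^{m-\underline{m}}$ being $z'$. *)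

(* Defs.v *)
From mathcomp Require Import all_boot all_order all_algebra.
Set Implicit Arguments. Unset Strict Implicit. Unset Printing Implicit Defensive.
Import Order.TTheory GRing.Theory Num.Theory.
Local Open Scope ring_scope.

(* F_2 is modelled by bool (addition = xor [addb], multiplication = [&&]).
   A point of F_2^m is a function 'I_m -> bool; a word is a function on points. *)
Notation point m := {ffun 'I_m -> bool}.
Notation word m := {ffun point m -> bool}.

Definition zeropt (m : nat) : point m := [ffun _ => false].

Definition monomial_eval (m : nat) (c : {ffun {set 'I_m} -> bool}) (x : point m)
  : bool :=
  \big[addb/false]_(S : {set 'I_m}) (c S && [forall i in S, x i]).

(* RM(m,r): evaluation vectors of polynomials of degree <= r in m variables
   (over F_2 such functions are exactly spanned by monomials prod_{i in S} x_i
   with |S| <= r). *)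
Definition RM (m r : nat) : {set word m} :=
  [set f : word m | [exists c : {ffun {set 'I_m} -> bool},
     [forall S : {set 'I_m}, (r < #|S|)%N ==> ~~ c S] &&
     [forall x : point m, f x == monomial_eval c x]]].

Definition bw (R : realFieldType) (e : R) (b : bool) : R := if b then e else 1 - e.
Definition wt (R : realFieldType) (T : finType) (e : R) (Z : {ffun T -> bool}) : R :=
  \prod_(x : T) bw e (Z x).

Definition recv (m : nat) (f Z : word m) : word m := [ffun x => f x (+) Z x].

(* (|RM| times) the joint probability that f(0^m) = b and that the received
   values at all x <> 0^m equal those of y *)
Definition lik (R : realFieldType) (m r : nat) (e : R) (y : word m) (b : bool) : R :=
  \sum_(g in RM m r | g (zeropt m) == b)
     \prod_(x : point m | x != zeropt m) bw e (y x (+) g x).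

(* probability that the MAP decoder L_{m,r,eps} errs on received word y when
   the true value f(0^m) is b (ties are broken uniformly at random) *)
Definition derr (R : realFieldType) (m r : nat) (e : R) (y : word m) (b : bool) : R :=
  let a := lik r e y b in let a' := lik r e y (~~ b) in
  if a' < a then 0 else if a' == a then 1 / 2 else 1.

Definition Pe (R : realFieldType) (m r : nat) (e : R) : R :=
  \sum_(f in RM m r) \sum_(Z : word m)
     (#|RM m r|%:R)^-1 * wt e Z * derr r e (recv f Z) (f (zeropt m)).

Definition emb (m_ m : nat) (x : point m_) : point m :=
  [ffun i : 'I_m => if (insub (val i) : option 'I_m_) is Some j then x j else false].

Definition restr (m_ m : nat) (Z : word m) : word m_ :=
  [ffun x : point m_ => Z (emb m x)].

Definition condPe (R : realFieldType) (m_ m r : nat) (e : R) (z' : word m_) : R :=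
  (\sum_(f in RM m r) \sum_(Z : word m | restr m_ Z == z')
     (#|RM m r|%:R)^-1 * wt e Z * derr r e (recv f Z) (f (zeropt m)))
  / (\sum_(Z : word m | restr m_ Z == z') wt e Z).
Arguments condPe {R} m_ m r e z'.
Arguments Pe {R} m r e.

(* Main.v *)
Require Import Defs.
From mathcomp Require Import all_boot all_order all_algebra perm.
From mathcomp Require Import ring lra.
Set Implicit Arguments. Unset Strict Implicit. Unset Printing Implicit Defensive.
Import Order.TTheory GRing.Theory Num.Theory.
Local Open Scope ring_scope.

Section Kernel.
Variable R : realFieldType.
Variable e : R.
Hypothesis e0 : 0 <= e.
Hypothesis e1 : e <= 1.
Variable m : nat.
Local Notation T := (point m).
Local Notation W := (word m).

Definition kk (b z w : bool) : R := if b then (z == w)%:R else bw e w.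
Definition jj (b z w : bool) : R := if b then (z == w)%:R * bw e z else bw e z * bw e w.

Definition EA (A : {set T}) (F : W -> R) (Z : W) : R :=
  \sum_(U : W) (\prod_(x : T) kk (x \in A) (Z x) (U x)) * F U.
Definition KA (A : {set T}) (F G : W -> R) : R :=
  \sum_(U : W) \sum_(V : W) (\prod_(x : T) jj (x \in A) (U x) (V x)) * F U * G V.
Definition ip (F G : W -> R) : R := \sum_(Z : W) wt e Z * F Z * G Z.

Lemma bw_ge0 b : 0 <= bw e b.
Proof. by case: b; rewrite /bw /= ?subr_ge0. Qed.

Lemma bw_sum b : bw e b + bw e (~~ b) = 1.
Proof. by case: b; rewrite /bw /=; ring. Qed.

Lemma wt_ge0 (Z : W) : 0 <= wt e Z.
Proof. by apply: prodr_ge0 => x _; apply: bw_ge0. Qed.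

Lemma sum_prod (h : T -> bool -> R) :
  \sum_(U : W) \prod_(x : T) h x (U x) = \prod_(x : T) (h x true + h x false).
Proof.
transitivity (\prod_(x : T) \sum_(b : bool) h x b); last first.
  by apply: eq_bigr => x _; rewrite big_bool.
by rewrite bigA_distr_bigA.
Qed.

Lemma wt_sum : \sum_(Z : W) wt e Z = 1.
Proof.
rewrite /wt (sum_prod (fun _ b => bw e b)); apply: big1 => x _ /=; rewrite /bw; ring.
Qed.

Lemma kernel (a b : T -> bool) (U V : W) :
  \sum_(Z : W) (wt e Z * \prod_(x : T) kk (a x) (Z x) (U x)) * \prod_(x : T) kk (b x) (Z x) (V x)
  = \prod_(x : T) jj (a x && b x) (U x) (V x).
Proof.
under eq_bigr do rewrite /wt -!big_split /=.
rewrite (sum_prod (fun x z => bw e z * kk (a x) z (U x) * kk (b x) z (V x))); apply: eq_bigr => x _.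
by case: (a x); case: (b x); case: (U x); case: (V x); rewrite /kk /jj /bw /=; ring.
Qed.

Lemma gram A B F G : ip (EA A F) (EA B G) = KA (A :&: B) F G.
Proof.
rewrite /ip /EA /KA.
transitivity (\sum_(Z : W) \sum_(U : W) \sum_(V : W)
  ((wt e Z * \prod_(x : T) kk (x \in A) (Z x) (U x)) * \prod_(x : T) kk (x \in B) (Z x) (V x))
   * (F U * G V)).
  apply: eq_bigr => Z _; rewrite [wt e Z * _]mulr_sumr mulr_suml; apply: eq_bigr => U _.
  rewrite mulr_sumr; apply: eq_bigr => V _; ring.
rewrite exchange_big; apply: eq_bigr => U _.
rewrite exchange_big; apply: eq_bigr => V _.
rewrite -mulr_suml kernel.
rewrite mulrA; congr (_ * _ * _); apply: eq_bigr => x _; by rewrite inE.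
Qed.

End Kernel.

Section K2.
Variable R : realFieldType.
Variable e : R.
Hypothesis e0 : 0 <= e.
Hypothesis e1 : e <= 1.
Variable m : nat.
Local Notation T := (point m).
Local Notation W := (word m).

Lemma prod_ind (A : {pred T}) (Z U : W) :
  \prod_(x in A) (((Z x == U x) : bool)%:R : R) = ([forall x in A, Z x == U x] : bool)%:R.
Proof.
case: (boolP [forall x in A, Z x == U x]) => [/forall_inP H|/forall_inPn [x Ax Hx]].
  by apply: big1 => x /H ->.
rewrite (bigD1 x) //= (negbTE Hx) mul0r //.
Qed.


Lemma prod_eqw (Z U : W) :
  \prod_(x : T) (((Z x == U x) : bool)%:R : R) = ((Z == U) : bool)%:R.
Proof.
case: (eqVneq Z U) => [->|neq]; first by apply: big1 => x _; rewrite eqxx.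
have [x Hx] : exists x, Z x != U x.
  apply/existsP; apply: contraNT neq => /existsPn H; apply/eqP/ffunP => x.
  by have := H x; rewrite negbK => /eqP.
by rewrite (bigD1 x) //= (negbTE Hx) mul0r.
Qed.

Lemma EA_setT F (Z : W) : EA e setT F Z = F Z.
Proof.
have hp : forall U : W, \prod_(x : T) kk e (x \in setT) (Z x) (U x) = ((Z == U) : bool)%:R.
  by move=> U; rewrite -prod_eqw; apply: eq_bigr => x _; rewrite inE.
rewrite /EA; under eq_bigr do rewrite hp.
rewrite (bigD1 Z) //= eqxx mul1r big1 ?addr0 // => U UZ.
by rewrite eq_sym (negbTE UZ) mul0r.
Qed.

Lemma kk_sum b z : kk e b z true + kk e b z false = 1.
Proof. by case: b; case: z; rewrite /kk /bw /=; ring. Qed.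

Lemma kk_sum' b z w : kk e b z w + kk e b z (~~ w) = 1.
Proof. by case: w; rewrite /= ?kk_sum // addrC kk_sum. Qed.

Lemma sumk (A : {set T}) (Z : W) : \sum_(U : W) \prod_(x : T) kk e (x \in A) (Z x) (U x) = 1.
Proof.
rewrite (sum_prod (fun x w => kk e (x \in A) (Z x) w)); apply: big1 => x _.
exact: kk_sum.
Qed.

Lemma EA_one (A : {set T}) (Z : W) : EA e A (fun _ => 1) Z = 1.
Proof. by rewrite /EA; under eq_bigr do rewrite mulr1; apply: sumk. Qed.

Lemma EA_lin (A : {set T}) F c (Z : W) : EA e A (fun U => F U - c) Z = EA e A F Z - c.
Proof.
rewrite /EA; under eq_bigr do rewrite mulrBr; rewrite sumrB -mulr_suml sumk mul1r //.
Qed.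

Definition flip (x0 : T) (U : W) : W := [ffun x => if x == x0 then ~~ U x else U x].

Lemma flipK x0 : involutive (flip x0).
Proof. move=> U; apply/ffunP => x; rewrite !ffunE; case: (x == x0) => //; exact: negbK. Qed.

Lemma flip_pair x0 (g1 g2 : bool -> R) (H : W -> R) :
  (forall w, g1 w + g1 (~~ w) = g2 w + g2 (~~ w)) ->
  (forall U, H (flip x0 U) = H U) ->
  \sum_(U : W) g1 (U x0) * H U = \sum_(U : W) g2 (U x0) * H U.
Proof.
move=> hg hH.
have key : forall g : bool -> R, \sum_(U : W) g (U x0) * H U + \sum_(U : W) g (U x0) * H U
   = \sum_(U : W) (g (U x0) + g (~~ U x0)) * H U.
  move=> g; rewrite {2}(reindex_inj (inv_inj (flipK x0))) /= -big_split /=.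
  apply: eq_bigr => U _; rewrite hH ffunE eqxx; ring.
have h1 := key g1; have h2 := key g2.
have h3 : \sum_(U : W) (g1 (U x0) + g1 (~~ U x0)) * H U = \sum_(U : W) (g2 (U x0) + g2 (~~ U x0)) * H U.
  by apply: eq_bigr => U _; rewrite hg.
move: h1 h2 h3; set a := \sum_(U : W) g1 (U x0) * H U; set b := \sum_(U : W) g2 (U x0) * H U.
move=> h1 h2 h3; lra.
Qed.

Lemma EA_drop (A : {set T}) x0 F (Z : W) : (forall U, F (flip x0 U) = F U) ->
  EA e A F Z = EA e (A :\ x0) F Z.
Proof.
move=> hF; rewrite /EA.
under eq_bigr do rewrite (bigD1 x0) //= -mulrA.
under [RHS]eq_bigr do rewrite (bigD1 x0) //= -mulrA.
rewrite (flip_pair (g1 := fun w => kk e (x0 \in A) (Z x0) w) (g2 := fun w => kk e (x0 \in A :\ x0) (Z x0) w)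
   (H := fun U => (\prod_(i | i != x0) kk e (i \in A) (Z i) (U i)) * F U)).
- apply: eq_bigr => U _; congr (_ * (_ * _)); apply: eq_bigr => x hx; by rewrite !inE hx.
- by move=> w; rewrite !kk_sum'.
- move=> U; rewrite hF; congr (_ * _); apply: eq_bigr => x hx; by rewrite ffunE (negbTE hx).
Qed.

End K2.

Section K3.
Variable R : realFieldType.
Variable e : R.
Hypothesis e0 : 0 <= e.
Hypothesis e1 : e <= 1.
Variable m : nat.
Local Notation T := (point m).
Local Notation W := (word m).

Definition Phi (phi : T -> T) (U : W) : W := [ffun x => U (phi x)].

Lemma PhiK phi : involutive phi -> involutive (Phi phi).
Proof. by move=> h U; apply/ffunP => x; rewrite !ffunE h. Qed.

Lemma KA_inv (phi : T -> T) (A : {set T}) (Y : W -> R) :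
  involutive phi -> (forall U, Y (Phi phi U) = Y U) ->
  KA e [set x | phi x \in A] Y Y = KA e A Y Y.
Proof.
move=> hphi hY; rewrite /KA [RHS](reindex_inj (inv_inj (PhiK hphi))) /=.
apply: eq_bigr => U _; rewrite [RHS](reindex_inj (inv_inj (PhiK hphi))) /=.
apply: eq_bigr => V _; rewrite !hY; congr (_ * _ * _).
rewrite [RHS](reindex_inj (inv_inj hphi)) /=; apply: eq_bigr => x _.
by rewrite !ffunE !hphi inE.
Qed.

Lemma triple (Y : W -> R) (U V1 V2 V3 C : {set T}) :
  U :&: V1 = V1 -> U :&: V2 = V2 -> U :&: V3 = V3 -> U :&: C = C ->
  V1 :&: V2 = C -> V1 :&: V3 = C -> V2 :&: V3 = C ->
  V1 :&: C = C -> V2 :&: C = C -> V3 :&: C = C ->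
  0 <= KA e U Y Y - (KA e V1 Y Y + KA e V2 Y Y + KA e V3 Y Y) + 2 * KA e C Y Y.
Proof.
move=> hU1 hU2 hU3 hUC h12 h13 h23 h1C h2C h3C.
have gr : forall A B, \sum_(Z : W) wt e Z * EA e A Y Z * EA e B Y Z = KA e (A :&: B) Y Y.
  by move=> A B; rewrite -gram.
set u := EA e U Y; set v1 := EA e V1 Y; set v2 := EA e V2 Y; set v3 := EA e V3 Y;
  set c := EA e C Y.
have H0 : 0 <= \sum_(Z : W) wt e Z * (u Z - v1 Z - v2 Z - v3 Z + 2 * c Z) ^+ 2.
  by apply: sumr_ge0 => Z _; apply: mulr_ge0; [apply: wt_ge0 | apply: sqr_ge0].
have E : \sum_(Z : W) wt e Z * (u Z - v1 Z - v2 Z - v3 Z + 2 * c Z) ^+ 2 =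
  \sum_(Z : W) (wt e Z * u Z * u Z + wt e Z * v1 Z * v1 Z + wt e Z * v2 Z * v2 Z
    + wt e Z * v3 Z * v3 Z + 4 * (wt e Z * c Z * c Z)
    + (-2) * (wt e Z * u Z * v1 Z) + (-2) * (wt e Z * u Z * v2 Z) + (-2) * (wt e Z * u Z * v3 Z)
    + 4 * (wt e Z * u Z * c Z) + 2 * (wt e Z * v1 Z * v2 Z) + 2 * (wt e Z * v1 Z * v3 Z)
    + 2 * (wt e Z * v2 Z * v3 Z) + (-4) * (wt e Z * v1 Z * c Z) + (-4) * (wt e Z * v2 Z * c Z)
    + (-4) * (wt e Z * v3 Z * c Z)).
  by apply: eq_bigr => Z _; ring.
move: H0; rewrite E !big_split -!mulr_sumr /= !gr !setIid hU1 hU2 hU3 hUC h12 h13 h23 h1C h2C h3C.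
move=> H; lra.
Qed.

End K3.

Section RMs.
Variables m r : nat.
Local Notation T := (point m).
Local Notation W := (word m).

Definition mono (S : {set 'I_m}) : W := [ffun x : T => [forall l in S, x l]].
Definition xorw (f g : W) : W := [ffun x : T => f x (+) g x].
Definition zw : W := [ffun _ => false].

Lemma RM_zero : zw \in RM m r.
Proof.
rewrite inE; apply/existsP; exists [ffun _ => false]; apply/andP; split.
  by apply/forallP => S; rewrite ffunE implybT.
apply/forallP => x; rewrite /monomial_eval ffunE big1 // => S _; by rewrite ffunE.
Qed.

Lemma RM_xor f g : f \in RM m r -> g \in RM m r -> xorw f g \in RM m r.
Proof.
rewrite !inE => /existsP [c /andP [/forallP dc /forallP ec]] /existsP [d /andP [/forallP dd /forallP ed]].
apply/existsP; exists [ffun S => c S (+) d S]; apply/andP; split.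
  apply/forallP => S; apply/implyP => hS; rewrite ffunE.
  by move: (implyP (dc S) hS) (implyP (dd S) hS); case: (c S); case: (d S).
apply/forallP => x; rewrite ffunE (eqP (ec x)) (eqP (ed x)) /monomial_eval -big_split /=.
by apply/eqP/eq_bigr => S _; rewrite ffunE; case: (c S); case: (d S); case: [forall i in S, x i].
Qed.

Lemma RM_mono (S : {set 'I_m}) : (#|S| <= r)%N -> mono S \in RM m r.
Proof.
move=> hS; rewrite inE; apply/existsP; exists [ffun S' => S' == S]; apply/andP; split.
  apply/forallP => S'; apply/implyP => h; rewrite ffunE; apply/eqP => E.
  by move: h; rewrite E ltnNge hS.
apply/forallP => x; rewrite ffunE /monomial_eval (bigD1 S) //= ffunE eqxx /= big1 ?addbF //.
by move=> S' hS'; rewrite ffunE (negbTE hS').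
Qed.

Lemma RM_pres (phi : T -> T) :
  (forall S : {set 'I_m}, (#|S| <= r)%N -> Phi phi (mono S) \in RM m r) ->
  forall f, f \in RM m r -> Phi phi f \in RM m r.
Proof.
move=> hm f; rewrite [f \in _]inE => /existsP [c /andP [/forallP dc /forallP ec]].
have -> : Phi phi f = \big[xorw/zw]_(S | c S) Phi phi (mono S).
  apply/ffunP => x.
  rewrite (big_morph (fun h : W => h x) (id1 := false) (op1 := addb)); last 2 first.
  - by move=> a b; rewrite ffunE.
  - by rewrite ffunE.
  rewrite ffunE (eqP (ec (phi x))) /monomial_eval [RHS]big_mkcond /=.
  by apply: eq_bigr => S _; rewrite !ffunE; case: (c S).
apply: (big_ind (fun g : W => g \in RM m r)); [exact: RM_zero | exact: RM_xor |].
move=> S hS; apply: hm; rewrite leqNgt; apply: contraL hS => h.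
exact: (implyP (dc S) h).
Qed.

End RMs.

Section Maps.
Variables m r : nat.
Local Notation T := (point m).
Local Notation W := (word m).

Lemma forall_setU1 (a : 'I_m) (B : {set 'I_m}) (g : 'I_m -> bool) :
  [forall l in a |: B, g l] = g a && [forall l in B, g l].
Proof.
apply/forall_inP/andP => [H|[ga /forall_inP H] l].
  split; first by apply: H; rewrite setU11.
  by apply/forall_inP => l lB; apply: H; rewrite setU1r.
by case/setU1P => [->|]; [| apply: H].
Qed.

Lemma eq_forall_in (B : {set 'I_m}) (g h : 'I_m -> bool) :
  (forall l, l \in B -> g l = h l) -> [forall l in B, g l] = [forall l in B, h l].
Proof.
move=> E; apply/forall_inP/forall_inP => H l lB; [rewrite -E | rewrite E] => //; exact: H.
Qed.

Definition tau (p q : 'I_m) (x : T) : T := [ffun l => if l == q then x q (+) x p else x l].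

Lemma tauK p q : p != q -> involutive (tau p q).
Proof.
move=> pq x; apply/ffunP => l; rewrite !ffunE.
case: (eqVneq l q) => [->|//]; rewrite eqxx (negbTE pq).
by case: (x q); case: (x p).
Qed.

Lemma tau0 p q : tau p q (zeropt m) = zeropt m.
Proof. by apply/ffunP => l; rewrite !ffunE; case: (l == q). Qed.

Lemma tau_mono p q (S : {set 'I_m}) : p != q -> (#|S| <= r)%N ->
  Phi (tau p q) (mono S) \in RM m r.
Proof.
move=> pq hS; case: (boolP (q \in S)) => hq; last first.
  suff -> : Phi (tau p q) (mono S) = mono S by exact: RM_mono.
  apply/ffunP => x; rewrite !ffunE; apply: eq_forall_in => l lS.
  rewrite ffunE; case: (eqVneq l q) => [E|//]; by rewrite -E lS in hq.
suff -> : Phi (tau p q) (mono S) = xorw (mono S) (mono (p |: (S :\ q))).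
  apply: RM_xor; first exact: RM_mono.
  apply: RM_mono; apply: leq_trans hS.
  rewrite cardsU1 (cardsD1 q S) hq add1n.
  by case: (p \notin S :\ q).

apply/ffunP => x; rewrite !ffunE -{1 2}(setD1K hq) !forall_setU1 ffunE eqxx.
rewrite (@eq_forall_in _ (fun l => tau p q x l) (fun l => x l)); last first.
  by move=> l; rewrite !inE ffunE => /andP [/negbTE -> _].
by case: (x q); case: (x p); case: [forall l in S :\ q, x l].
Qed.

Definition sig (p q : 'I_m) (x : T) : T := [ffun l => x (tperm p q l)].

Lemma sigK p q : involutive (sig p q).
Proof. by move=> x; apply/ffunP => l; rewrite !ffunE tpermK. Qed.

Lemma sig0 p q : sig p q (zeropt m) = zeropt m.
Proof. by apply/ffunP => l; rewrite !ffunE. Qed.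

Lemma sig_mono p q (S : {set 'I_m}) : (#|S| <= r)%N ->
  Phi (sig p q) (mono S) \in RM m r.
Proof.
move=> hS.
suff -> : Phi (sig p q) (mono S) = mono (tperm p q @: S).
  by apply: RM_mono; rewrite card_imset //; exact: perm_inj.
apply/ffunP => x; rewrite !ffunE; apply/forall_inP/forall_inP => H l.
  by case/imsetP => l' l'S ->; have := H l' l'S; rewrite ffunE.
by move=> lS; rewrite ffunE; apply: H; apply: imset_f.
Qed.

End Maps.

Section Xs.
Variable R : realFieldType.
Variable e : R.
Variables m r : nat.
Local Notation T := (point m).
Local Notation W := (word m).
Local Notation z0 := (zeropt m).

Definition Xf (Z : W) : R :=
  (#|RM m r|%:R)^-1 * \sum_(f in RM m r) derr r e (recv f Z) (f z0).

Section Inv.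
Variable phi : T -> T.
Hypothesis hphi : involutive phi.
Hypothesis hphi0 : phi z0 = z0.
Hypothesis hR : forall f, f \in RM m r -> Phi phi f \in RM m r.

Lemma RM_Phi f : (Phi phi f \in RM m r) = (f \in RM m r).
Proof.
apply/idP/idP => [h|]; last exact: hR.
by rewrite -(PhiK hphi f); apply: hR.
Qed.

Lemma sum_RM_Phi (G : W -> R) :
  \sum_(f in RM m r) G f = \sum_(f in RM m r) G (Phi phi f).
Proof.
rewrite (reindex_inj (inv_inj (PhiK hphi))) /=.
by apply: eq_bigl => f; rewrite RM_Phi.
Qed.

Lemma phi_nz x : (phi x != z0) = (x != z0).
Proof.
apply/idP/idP; apply: contra => /eqP h; apply/eqP.
  by rewrite h.
by rewrite -(hphi x) h.
Qed.

Lemma lik_Phi (y : W) b : lik r e (Phi phi y) b = lik r e y b.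
Proof.
rewrite /lik [RHS](reindex_inj (inv_inj (PhiK hphi))) /=.
apply: eq_big => g; first by rewrite RM_Phi ffunE hphi0.
move=> _; rewrite [RHS](reindex_inj (inv_inj hphi)) /=.
rewrite (eq_bigl (fun x => phi x != z0)); last by move=> x; rewrite phi_nz.
by apply: eq_bigr => x _; rewrite !ffunE hphi.
Qed.

Lemma derr_Phi (y : W) b : derr r e (Phi phi y) b = derr r e y b.
Proof. by rewrite /derr !lik_Phi. Qed.

Lemma X_Phi (Z : W) : Xf (Phi phi Z) = Xf Z.
Proof.
rewrite /Xf [in RHS](sum_RM_Phi); congr (_ * _); apply: eq_bigr => f _.
have -> : recv (Phi phi f) Z = Phi phi (recv f (Phi phi Z)).
  by apply/ffunP => x; rewrite !ffunE hphi.
by rewrite derr_Phi ffunE hphi0.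
Qed.
End Inv.

Lemma lik_flip (y : W) b : lik r e (flip z0 y) b = lik r e y b.
Proof.
rewrite /lik; apply: eq_bigr => g _; apply: eq_bigr => x hx.
by rewrite ffunE (negbTE hx).
Qed.

Lemma derr_flip (y : W) b : derr r e (flip z0 y) b = derr r e y b.
Proof. by rewrite /derr !lik_flip. Qed.

Lemma X_flip (Z : W) : Xf (flip z0 Z) = Xf Z.
Proof.
rewrite /Xf; congr (_ * _); apply: eq_bigr => f _.
have -> : recv f (flip z0 Z) = flip z0 (recv f Z).
  apply/ffunP => x; rewrite !ffunE; case: (x == z0) => //.
  by case: (f x); case: (Z x).
by rewrite derr_flip.
Qed.

End Xs.

Section Pes.
Variable R : realFieldType.
Variable e : R.
Hypothesis e0 : 0 <= e.
Hypothesis e1 : e <= 1.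
Variables m r : nat.
Local Notation T := (point m).
Local Notation W := (word m).
Local Notation z0 := (zeropt m).

Lemma RM_gt0 : (0 < #|RM m r|)%N.
Proof. by apply/card_gt0P; exists (zw m); apply: RM_zero. Qed.

Lemma derr_ge0 (y : W) b : 0 <= derr r e y b.
Proof. rewrite /derr; case: ifP => _ //; case: ifP => _ //; lra. Qed.

Lemma derr_le1 (y : W) b : derr r e y b <= 1.
Proof. rewrite /derr; case: ifP => _ //; case: ifP => _ //; lra. Qed.

Lemma X_ge0 (Z : W) : 0 <= Xf e r Z.
Proof.
apply: mulr_ge0; first by rewrite invr_ge0 ler0n.
by apply: sumr_ge0 => f _; apply: derr_ge0.
Qed.

Lemma X_le1 (Z : W) : Xf e r Z <= 1.
Proof.
have hc : 0 < (#|RM m r|%:R : R) by rewrite ltr0n RM_gt0.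
rewrite /Xf ler_pdivrMl // mulr1.
have -> : (#|RM m r|%:R : R) = \sum_(f in RM m r) 1 by rewrite sumr_const.
by apply: ler_sum => f _; apply: derr_le1.
Qed.

Lemma Pe_X : Pe m r e = \sum_(Z : W) wt e Z * Xf e r Z.
Proof.
rewrite /Pe exchange_big; apply: eq_bigr => Z _.
by rewrite /Xf !mulr_sumr; apply: eq_bigr => f _; ring.
Qed.

End Pes.

Section Half.
Variable R : realFieldType.
Variable e : R.
Hypothesis e0 : 0 <= e.
Hypothesis e1 : e <= 1.
Variables m r : nat.
Local Notation T := (point m).
Local Notation W := (word m).
Local Notation z0 := (zeropt m).

Lemma recvK (f : W) : involutive (recv f).
Proof. by move=> y; apply/ffunP => x; rewrite !ffunE addbA addbb. Qed.

Lemma derr_pair (y : W) :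
  derr r e y true * lik r e y true + derr r e y false * lik r e y false
  <= (lik r e y true + lik r e y false) / 2.
Proof.
rewrite /derr /=; set a := lik r e y true; set a' := lik r e y false.
case: (ltgtP a' a) => h.
- lra.
- lra.
- rewrite h; lra.
Qed.

Lemma sum_lik : \sum_(y : W) (lik r e y true + lik r e y false) = 2 * #|RM m r|%:R.
Proof.
transitivity (\sum_(y : W) \sum_(g in RM m r) \prod_(x | x != z0) bw e (y x (+) g x)).
  apply: eq_bigr => y _.
  rewrite [RHS](partition_big (fun g : W => g z0) predT) //= big_bool //.
rewrite exchange_big /= -sumr_const [RHS]mulr_sumr; apply: eq_bigr => g _.
under eq_bigr do rewrite big_mkcond /=.
rewrite (sum_prod (fun x b => if x != z0 then bw e (b (+) g x) else 1)).
rewrite (bigD1 z0) //= big1 ?mulr1 //.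
  by rewrite eqxx.
move=> x hx; rewrite hx; have := bw_sum e (g x); lra.
Qed.


Lemma Pe_le_half : Pe m r e <= 1 / 2.
Proof.
set c := (#|RM m r|%:R : R)^-1.
have hc : 0 < (#|RM m r|%:R : R) by rewrite ltr0n RM_gt0.
have S1 : Pe m r e = c * \sum_(y : W) \sum_(b : bool)
    bw e (b (+) y z0) * (derr r e y b * lik r e y b).
  rewrite /Pe.
  transitivity (c * \sum_(f in RM m r) \sum_(y : W)
     (bw e (f z0 (+) y z0) * \prod_(x | x != z0) bw e (y x (+) f x)) * derr r e y (f z0)).
    rewrite mulr_sumr; apply: eq_bigr => f _; rewrite mulr_sumr (reindex_inj (inv_inj (recvK f))) /=.
    apply: eq_bigr => y _; rewrite recvK /wt (bigD1 z0) //= ffunE.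
    have -> : \prod_(i | i != z0) bw e (recv f y i) = \prod_(x | x != z0) bw e (y x (+) f x).
      by apply: eq_bigr => x _; rewrite ffunE addbC.
    rewrite /c; ring.
  congr (_ * _); rewrite exchange_big; apply: eq_bigr => y _ /=.
  rewrite (partition_big (fun g : W => g z0) predT) //=; apply: eq_bigr => b _.
  rewrite /lik mulr_sumr mulr_sumr; apply: eq_bigr => f /andP [_ /eqP ->].
  ring.
have S2 : forall b, \sum_(y : W) bw e (b (+) y z0) * (derr r e y b * lik r e y b)
    = \sum_(y : W) (1 / 2) * (derr r e y b * lik r e y b).
  move=> b; apply: (flip_pair (x0 := z0) (g1 := fun w => bw e (b (+) w)) (g2 := fun _ => 1 / 2) (H := fun y => derr r e y b * lik r e y b)).
    by move=> w; have := bw_sum e (b (+) w); rewrite addbN; lra.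
  by move=> U; rewrite derr_flip lik_flip.
rewrite S1 exchange_big big_bool (S2 true) (S2 false) -big_split /=.
have S3 : \sum_(y : W) (1 / 2 * (derr r e y true * lik r e y true) +
      1 / 2 * (derr r e y false * lik r e y false))
   <= \sum_(y : W) (1 / 4) * (lik r e y true + lik r e y false).
  apply: ler_sum => y _; have := derr_pair y; lra.
rewrite -mulr_sumr sum_lik in S3.
have hc' : c * (#|RM m r|%:R) = 1 by rewrite mulVf // gt_eqF.
have c0 : 0 <= c by rewrite invr_ge0 ltW.
have := ler_wpM2l c0 S3; nra.
Qed.

End Half.

Section Sets.
Variable m : nat.
Local Notation T := (point m).
Local Notation W := (word m).
Local Notation z0 := (zeropt m).

Definition Vd (d : nat) : {set T} := [set x : T | [forall i : 'I_m, (d <= i)%N ==> ~~ x i]].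

Lemma Vd_step d (hd : (d < m)%N) x : (x \in Vd d) = ~~ x (Ordinal hd) && (x \in Vd d.+1).
Proof.
rewrite !inE; apply/forallP/andP => [H|[h /forallP H] i].
  split; first by have := H (Ordinal hd); rewrite leqnn.
  by apply/forallP => i; apply/implyP => hi; have := H i; rewrite (ltnW hi).
apply/implyP; rewrite leq_eqVlt => /orP [/eqP E|hi].
  by have -> : i = Ordinal hd by apply: val_inj; rewrite /= E.
exact: (implyP (H i) hi).
Qed.

Lemma Vd_agree d (x y : T) : (forall i : 'I_m, (d <= i)%N -> x i = y i) ->
  (x \in Vd d) = (y \in Vd d).
Proof.
move=> H; rewrite !inE; apply/forallP/forallP => H' i; apply/implyP => hi;
  have := implyP (H' i) hi; by rewrite H.
Qed.

Lemma Vd0 : Vd 0 :\ z0 = set0.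
Proof.
apply/setP => x; rewrite !inE; apply/negbTE; rewrite negb_and negbK.
apply/orP; case: (boolP [forall i : 'I_m, (0 <= i)%N ==> ~~ x i]) => H; [left | by right].
apply/eqP/ffunP => i; rewrite ffunE; by have := implyP (forallP H i) isT; case: (x i).
Qed.

Lemma Vdm : Vd m = setT.
Proof.
apply/setP => x; rewrite !inE; apply/forallP => i; apply/implyP.
by rewrite leqNgt ltn_ord.
Qed.

Variable m_ : nat.
Hypothesis hm : (m_ <= m)%N.

Lemma emb_widen (p : point m_) (j : 'I_m_) : emb m p (widen_ord hm j) = p j.
Proof.
rewrite ffunE; case: insubP => [k _ hk|]; last by rewrite /= ltn_ord.
by congr (p _); apply: val_inj; rewrite hk.
Qed.

Lemma emb_inj : injective (@emb m_ m).
Proof. move=> p q E; apply/ffunP => j; by rewrite -!emb_widen E. Qed.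

Lemma emb_img : [set emb m p | p : point m_] = Vd m_.
Proof.
apply/setP => x; apply/imsetP/idP => [[p _ ->]|].
  rewrite inE; apply/forallP => i; apply/implyP => hi; rewrite ffunE.
  by case: insubP => // k; rewrite ltnNge hi.
move=> hx; exists [ffun j : 'I_m_ => x (widen_ord hm j)] => //.
apply/ffunP => i; rewrite ffunE; case: insubP => [k _ hk|].
  by rewrite ffunE; congr (x _); apply: val_inj; rewrite /= hk.
rewrite -leqNgt => hi; move: hx; rewrite inE => /forallP /(_ i) /implyP /(_ hi).
by case: (x i).
Qed.

End Sets.

Section Restr.
Variable R : realFieldType.
Variable e : R.
Variables m_ m : nat.
Hypothesis hm : (m_ <= m)%N.
Local Notation T := (point m).
Local Notation W := (word m).
Local Notation V := (Vd m m_).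

Lemma restr_eq (U Z : W) : (restr m_ U == restr m_ Z) = [forall x in V, Z x == U x].
Proof.
apply/eqP/forall_inP => [E x|H].
  rewrite -(emb_img hm) => /imsetP [p _ ->].
  by have := congr1 (fun g : word m_ => g p) E; rewrite !ffunE => ->.
apply/ffunP => p; rewrite !ffunE; apply/esym/eqP/H.
by rewrite -(emb_img hm); apply: imset_f.
Qed.

Lemma wt_restr (Z : W) : wt e (restr m_ Z) = \prod_(x in V) bw e (Z x).
Proof.
rewrite -(emb_img hm) big_imset /=; last by move=> p q _ _; apply: emb_inj.
by rewrite /wt; apply: eq_bigr => p _; rewrite ffunE.
Qed.

Lemma restr_sum (F : W -> R) (Z : W) :
  \sum_(U : W | restr m_ U == restr m_ Z) wt e U * F U = wt e (restr m_ Z) * EA e V F Z.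
Proof.
rewrite /EA mulr_sumr big_mkcond /=; apply: eq_bigr => U _.
rewrite mulrA; case: ifP => hU; last first.
  rewrite restr_eq in hU; case/forall_inPn: hU => x hx hZ.
  by rewrite (bigD1 x) //= hx /kk (negbTE hZ) mul0r mulr0 mul0r.
suff -> : wt e (restr m_ Z) * \prod_x kk e (x \in V) (Z x) (U x) = wt e U by [].
rewrite wt_restr big_mkcond /= -big_split /=.
apply: eq_bigr => x _; rewrite /kk; case: ifP => hx //=; last by rewrite mul1r.
rewrite restr_eq in hU; by rewrite (eqP (forall_inP hU x hx)) eqxx mulr1.
Qed.

End Restr.

Section Cond.
Variable R : realFieldType.
Variable e : R.
Hypothesis e0 : 0 < e.
Hypothesis e1 : e < 1.
Variables m_ m r : nat.
Hypothesis hm : (m_ <= m)%N.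
Local Notation T := (point m).
Local Notation W := (word m).
Local Notation V := (Vd m m_).

Lemma wt_gt0 (Tp : finType) (Z : {ffun Tp -> bool}) : 0 < wt e Z.
Proof. apply: prodr_gt0 => x _; rewrite /bw; move: e0 e1; case: (Z x) => a b; lra. Qed.

Lemma condPe_EA (Z : W) : condPe m_ m r e (restr m_ Z) = EA e V (Xf e r) Z.
Proof.
rewrite /condPe exchange_big /=.
have -> : \sum_(U : W | restr m_ U == restr m_ Z)
    \sum_(f in RM m r) (#|RM m r|%:R)^-1 * wt e U * derr r e (recv f U) (f (zeropt m))
  = \sum_(U : W | restr m_ U == restr m_ Z) wt e U * Xf e r U.
  by apply: eq_bigr => U _; rewrite /Xf !mulr_sumr; apply: eq_bigr => f _; ring.
rewrite restr_sum //.
have -> : \sum_(U : W | restr m_ U == restr m_ Z) wt e U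
   = \sum_(U : W | restr m_ U == restr m_ Z) wt e U * (fun _ => 1) U.
  by apply: eq_bigr => U _; rewrite mulr1.
rewrite restr_sum // EA_one mulr1 mulrC mulKf //.
by rewrite gt_eqF // wt_gt0.
Qed.

Definition ext (z : word m_) : W := [ffun x : T => z [ffun j : 'I_m_ => x (widen_ord hm j)]].

Lemma restr_ext z : restr m_ (ext z) = z.
Proof.
apply/ffunP => p; rewrite !ffunE; congr (z _); apply/ffunP => j.
by rewrite ffunE emb_widen.
Qed.

Lemma push (Q : pred R) :
  \sum_(z : word m_ | Q (condPe m_ m r e z)) wt e z
  = \sum_(Z : W | Q (EA e V (Xf e r) Z)) wt e Z.
Proof.
rewrite (eq_bigl (fun Z : W => Q (condPe m_ m r e (restr m_ Z)))); last first.
  by move=> Z; rewrite condPe_EA.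
rewrite (partition_big (@restr m_ m) (fun z => Q (condPe m_ m r e z))) //=.
apply: eq_bigr => z hz.
rewrite (eq_bigl (fun U : W => restr m_ U == restr m_ (ext z))); last first.
  move=> U; rewrite restr_ext; case: (eqVneq (restr m_ U) z) => [->|]; by rewrite ?hz ?andbF ?andbT.
have -> : \sum_(U : W | restr m_ U == restr m_ (ext z)) wt e U
   = \sum_(U : W | restr m_ U == restr m_ (ext z)) wt e U * (fun _ => 1) U.
  by apply: eq_bigr => U _; rewrite mulr1.
by rewrite restr_sum // EA_one mulr1 restr_ext.
Qed.

End Cond.

Section Rec.
Variable R : realFieldType.
Variable e : R.
Hypothesis e0 : 0 <= e.
Hypothesis e1 : e <= 1.
Variables m r : nat.
Local Notation T := (point m).
Local Notation W := (word m).
Local Notation z0 := (zeropt m).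

Definition Yf (Z : W) : R := Xf e r Z - Pe m r e.
Definition aa (d : nat) : R := KA e (Vd m d) Yf Yf.

Lemma Y_Phi (phi : T -> T) : involutive phi -> phi z0 = z0 ->
  (forall S : {set 'I_m}, (#|S| <= r)%N -> Phi phi (mono S) \in RM m r) ->
  forall U, Yf (Phi phi U) = Yf U.
Proof.
move=> h1 h2 h3 U; rewrite /Yf X_Phi //.
exact: RM_pres.
Qed.

Lemma a_step n (h : (n.+2 <= m)%N) : 0 <= aa n.+2 - 3 * aa n.+1 + 2 * aa n.
Proof.
have hp : (n < m)%N by apply: leq_trans h; rewrite ltnW.
have hq : (n.+1 < m)%N by [].
set p := Ordinal hp; set q := Ordinal hq.
have pq : p != q by rewrite -val_eqE /= ltn_eqF.
set U := Vd m n.+2; set V1 := Vd m n.+1; set C := Vd m n.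
set V2 := [set x : T | sig p q x \in V1]; set V3 := [set x : T | tau p q x \in V1].
have m1 : forall x, (x \in V1) = ~~ x q && (x \in U) by move=> x; rewrite /V1 (Vd_step hq).
have mC : forall x, (x \in C) = ~~ x p && (~~ x q && (x \in U)) by move=> x; rewrite /C (Vd_step hp) -m1.
have m2 : forall x, (x \in V2) = ~~ x p && (x \in U).
  move=> x; rewrite inE m1 ffunE tpermR; congr (_ && _); apply: Vd_agree => i hi.
  rewrite ffunE tpermD //; apply/eqP => /(congr1 val) /= E; move: hi; rewrite -E ?ltnn //.
  by rewrite ltnNge leqnSn.
have m3 : forall x, (x \in V3) = ~~ (x q (+) x p) && (x \in U).
  move=> x; rewrite inE m1 ffunE eqxx; congr (_ && _); apply: Vd_agree => i hi.
  rewrite ffunE; case: eqP => // E; move: hi; rewrite E /= ltnn //.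
have t := triple e0 e1 Yf (U := U) (V1 := V1) (V2 := V2) (V3 := V3) (C := C).
have e2 : KA e V2 Yf Yf = aa n.+1.
  by rewrite /V2 KA_inv //; [exact: sigK | apply: Y_Phi; [exact: sigK | exact: sig0 | move=> S; exact: sig_mono]].
have e3 : KA e V3 Yf Yf = aa n.+1.
  by rewrite /V3 KA_inv //; [exact: tauK | apply: Y_Phi; [exact: tauK | exact: tau0 | move=> S; exact: tau_mono]].
have := t; rewrite e2 e3 /aa -/U -/V1 -/C; move=> t'.
suff : 0 <= KA e U Yf Yf - (KA e V1 Yf Yf + KA e V1 Yf Yf + KA e V1 Yf Yf) + 2 * KA e C Yf Yf.
  move=> H; lra.
apply: t'; apply/setP => x; rewrite in_setI ?m1 ?m2 ?m3 ?mC;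
  by case: (x p); case: (x q); case: (x \in U).
Qed.

End Rec.

Section Fin.
Variable R : realFieldType.
Variable e : R.
Hypothesis e0 : 0 <= e.
Hypothesis e1 : e <= 1.
Variables m r : nat.
Local Notation T := (point m).
Local Notation W := (word m).
Local Notation z0 := (zeropt m).

Lemma aa_ip d : aa e m r d = ip e (EA e (Vd m d) (Yf e r)) (EA e (Vd m d) (Yf e r)).
Proof. by rewrite gram setIid. Qed.

Lemma aa_ge0 d : 0 <= aa e m r d.
Proof.
rewrite aa_ip; apply: sumr_ge0 => Z _; rewrite -mulrA; apply: mulr_ge0.
  exact: wt_ge0.
by rewrite -expr2 sqr_ge0.
Qed.

Lemma Pe_ge0 : 0 <= Pe m r e.
Proof.
rewrite Pe_X; apply: sumr_ge0 => Z _; apply: mulr_ge0; [exact: wt_ge0 | exact: X_ge0].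
Qed.

Lemma aa0 : aa e m r 0 = 0.
Proof.
rewrite aa_ip /ip big1 // => Z _.
rewrite (@EA_drop _ _ _ _ z0); last by move=> U; rewrite /Yf X_flip.
rewrite Vd0.
have -> : EA e set0 (Yf e r) Z = 0.
  rewrite /EA.
  transitivity (\sum_(U : W) wt e U * Xf e r U - Pe m r e * \sum_(U : W) wt e U).
    rewrite mulr_sumr -sumrB; apply: eq_bigr => U _.
    have -> : \prod_(x : T) kk e (x \in set0) (Z x) (U x) = wt e U.
      by apply: eq_bigr => x _; rewrite inE.
    rewrite /Yf; ring.
  by rewrite -Pe_X wt_sum mulr1 subrr.
by rewrite mulr0.
Qed.

Lemma aam : aa e m r m <= 1.
Proof.
rewrite aa_ip Vdm -(wt_sum e m); apply: ler_sum => Z _.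
rewrite !EA_setT -mulrA; apply: ler_piMr; first exact: wt_ge0.
have := X_ge0 e r Z; have := X_le1 e r Z; have := Pe_ge0; have := Pe_le_half e m r.
rewrite /Yf; move=> a b c d; nra.
Qed.

Lemma aa_double d : (d < m)%N -> 2 * aa e m r d <= aa e m r d.+1.
Proof.
elim: d => [_|d IH hd].
  by rewrite aa0 mulr0 aa_ge0.
have := a_step e0 e1 r hd; have := IH (ltnW hd); lra.
Qed.

Lemma aa_iter d k : (d + k <= m)%N -> aa e m r d * 2 ^+ k <= aa e m r (d + k).
Proof.
elim: k => [|k IH] h; first by rewrite expr0 mulr1 addn0.
have h1 : (d + k <= m)%N by apply: leq_trans h; rewrite leq_add2l.
have h2 : (d + k < m)%N by rewrite -addnS.
have := IH h1; have := aa_double h2; rewrite addnS exprS.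
have := aa_ge0 d; have : (0 : R) <= 2 ^+ k by apply: exprn_ge0.
move=> a b c f; nra.
Qed.

End Fin.

Theorem lemma3 (R : realFieldType) (m_ m r : nat) (e : R) :
  (m_ < m)%N -> 0 < e -> e < 1 / 2 ->
  (\sum_(z' : word m_ | Pe m r e / 2 + 1 / 4 <= condPe m_ m r e z') wt e z')
    * (1 / 2 - Pe m r e) ^+ 2
  <= (2 : R) ^ (2%:Z - (m - m_)%:Z).
Proof.
move=> hm he0 he1.
have e0 : 0 <= e by lra.
have e1 : e <= 1 by lra.
have e1' : e < 1 by lra.
have hm' : (m_ <= m)%N by apply: ltnW.
set k := (m - m_)%N.
rewrite (push he0 e1' r hm' (fun v => Pe m r e / 2 + 1 / 4 <= v)).
set P := Pe m r e.
have P0 : 0 <= P by apply: Pe_ge0.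
have P1 : P <= 1 / 2 by apply: Pe_le_half.
set V := Vd m m_.
set t := (1 / 2 - P) / 2.
have S1 : (\sum_(Z : word m | P / 2 + 1 / 4 <= EA e V (Xf e r) Z) wt e Z) * t ^+ 2
    <= aa e m r m_.
  rewrite mulr_suml aa_ip -/V.
  apply: le_trans (_ : \sum_(Z : word m | P / 2 + 1 / 4 <= EA e V (Xf e r) Z)
     wt e Z * EA e V (Yf e r) Z * EA e V (Yf e r) Z <= _).
    apply: ler_sum => Z hZ; rewrite -mulrA; apply: ler_wpM2l; first exact: wt_ge0.
    rewrite /Yf EA_lin; move: hZ; rewrite -/P /t => hZ; nra.
  rewrite [X in _ <= X](bigID (fun Z => P / 2 + 1 / 4 <= EA e V (Xf e r) Z)) /= lerDl.
  apply: sumr_ge0 => Z _; rewrite -mulrA; apply: mulr_ge0; first exact: wt_ge0.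
  by rewrite -expr2 sqr_ge0.
have S2 : aa e m r m_ * 2 ^+ k <= 1.
  apply: le_trans (aam e0 e1 m r); have := aa_iter e0 e1 r (d := m_) (k := k).
  by rewrite subnKC // => ->.
have hk : (2 : R) ^ (2%:Z - k%:Z) = 4 / 2 ^+ k.
  rewrite expfzDr; last by rewrite pnatr_eq0.
  have E := exprnN (2:R) k.
  transitivity ((2:R) ^ 2%Z * (2:R) ^- k); first by rewrite E.
  by rewrite -exprnP expr2 -natrM.
rewrite hk.
have h2k : (0 : R) < 2 ^+ k by apply: exprn_gt0.
rewrite ler_pdivlMr //.
move: S1 S2; set s := \sum_(Z : word m | _) _; rewrite /t => S1 S2.
have a0 := aa_ge0 e0 e1 m r m_.
nra.
Qed.
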